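(* For every positive integer $n\notin\{1,2,3,6\}$, $A'(n,6,4)=A(n,6,4)$. Moreover, $A'(n,6,4)=1$ for $n\in\{1,2,3\}$ and $A'(6,6,4)=2$.
   Context: For ${\sf u},{\sf v}\in\mathbb{F}_2^n$, $\Delta({\sf u},{\sf v})$ is the Hamming distance and ${\rm wt}({\sf u})$ the Hamming weight. $A'(n,d,e)$ denotes the maximum size of a nonempty set $S\subseteq \mathbb{F}_2^n$ such that ${\rm wt}({\sf u})\le e$ for all ${\sf u}\in S$ and $\Delta({\sf u},{\sf v})\ge d$ for all distinct ${\sf u},{\sf v}\in S$. $A(n,d,e)$ denotes the maximum size of a set $S\subseteq\mathbb{F}_2^n$ all of whose elements have weight exactly $e$ and with pairwise distances at least $d$ (the maximum size of a constant-weight code). It is known that, writing $L(n)=\left\lfloor \frac{n}{4} \left\lfloor \frac{n-1}{3}\right\rfloor \right\rfloor$: $A(n,6,4)=L(n)-1$ if $n\equiv 7,10 \pmod{12}$ and $n\notin\{10,19\}$; $A(n,6,4)=L(n)-1$ if $n\in\{9,17\}$; $A(n,6,4)=L(n)-2$ if $n\in\{8,10,11\}$; $A(19,6,4)=L(19)-3$; and $A(n,6,4)=L(n)$ otherwise. *)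

(* Defs.v *)
From mathcomp Require Import all_boot all_order.
Set Implicit Arguments. Unset Strict Implicit. Unset Printing Implicit Defensive.

Definition word (n : nat) := {ffun 'I_n -> bool}.

Definition wt (n : nat) (u : word n) : nat := #|[set i : 'I_n | u i]|.
Definition hdist (n : nat) (u v : word n) : nat := #|[set i : 'I_n | u i != v i]|.

Definition min_dist_ge (n d : nat) (S : {set word n}) : bool :=
  [forall u in S, forall v in S, (u != v) ==> (d <= hdist u v)].

Definition admissible' (n d e : nat) (S : {set word n}) : bool :=
  [&& S != set0, [forall u in S, wt u <= e] & min_dist_ge d S].

Definition admissible (n d e : nat) (S : {set word n}) : bool :=
  [forall u in S, wt u == e] && min_dist_ge d S.

Definition A' (n d e : nat) : nat := \max_(S : {set word n} | admissible' d e S) #|S|.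
Definition A (n d e : nat) : nat := \max_(S : {set word n} | admissible d e S) #|S|.

(* Main.v *)
Require Import Defs.
From mathcomp Require Import all_boot all_order.
From mathcomp Require Import zify.
Set Implicit Arguments. Unset Strict Implicit. Unset Printing Implicit Defensive.

Definition sup n (u : word n) : {set 'I_n} := [set i | u i].
Definition wd n (A : {set 'I_n}) : word n := [ffun i => i \in A].

Lemma sup_wd n (A : {set 'I_n}) : sup (wd A) = A.
Proof. by apply/setP => i; rewrite inE ffunE. Qed.

Lemma wd_sup n (u : word n) : wd (sup u) = u.
Proof. by apply/ffunP => i; rewrite ffunE inE. Qed.

Lemma wtE n (u : word n) : wt u = #|sup u|.
Proof. by []. Qed.

Lemma hdistE n (u v : word n) :
  hdist u v + 2 * #|sup u :&: sup v| = #|sup u| + #|sup v|.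
Proof.
rewrite /hdist.
have -> : [set i | u i != v i] = (sup u :|: sup v) :\: (sup u :&: sup v).
  by apply/setP => i; rewrite !inE; case: (u i); case: (v i).
rewrite cardsD.
have -> : (sup u :|: sup v) :&: (sup u :&: sup v) = sup u :&: sup v.
  by apply/setIidPr; apply: subset_trans (subsetIl _ _) (subsetUl _ _).
have h1 := cardsUI (sup u) (sup v).
have h2 : #|sup u :&: sup v| <= #|sup u :|: sup v|.
  by apply: subset_leq_card; apply: subset_trans (subsetIl _ _) (subsetUl _ _).
by rewrite -h1 mul2n -addnn addnA subnK.
Qed.

Lemma card_le1 (T : finType) (S : {set T}) :
  (forall e e', e \in S -> e' \in S -> e = e') -> #|S| <= 1.
Proof.
move=> H; rewrite leqNgt; apply/negP => /card_gt1P [x [y [hx hy hxy]]].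
by move/negP: hxy; apply; rewrite (H x y hx hy).
Qed.

Lemma le1_inter (T : finType) (X Y : {set T}) e e' :
  #|X :&: Y| <= 1 -> e \in X -> e \in Y -> e' \in X -> e' \in Y -> e = e'.
Proof.
move=> H h1 h2 h3 h4; apply/eqP; apply: contraT => ne.
have : 1 < #|X :&: Y| by apply/card_gt1P; exists e, e'; rewrite !inE h1 h2 h3 h4 ne.
lia.
Qed.

Lemma disj_inter (T : finType) (X Y : {set T}) e :
  #|X :&: Y| = 0 -> e \in X -> e \in Y -> False.
Proof.
move=> /eqP; rewrite cards_eq0 => /eqP H h1 h2.
have : e \in X :&: Y by rewrite inE h1 h2.
by rewrite H inE.
Qed.
Definition okF n (F : {set {set 'I_n}}) := forall A B, A \in F -> B \in F -> A != B ->
  6 + 2 * #|A :&: B| <= #|A| + #|B|.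
Definition le4 n (F : {set {set 'I_n}}) := forall A, A \in F -> #|A| <= 4.
Definition dfc n (F : {set {set 'I_n}}) := #|[set A in F | #|A| < 4]|.

Lemma step n (F : {set {set 'I_n}}) (f : {set 'I_n} -> {set 'I_n}) B0 :
 le4 F -> okF F ->
 (forall B, B \in F -> #|f B| = 4 \/ f B = B) ->
 (forall B B', B \in F -> B' \in F -> B != B' -> 6 + 2 * #|f B :&: f B'| <= #|f B| + #|f B'|) ->
 B0 \in F -> #|B0| < 4 -> #|f B0| = 4 ->
 [/\ le4 (f @: F), okF (f @: F), #|f @: F| = #|F| & dfc (f @: F) < dfc F].
Proof.
move=> hle hok H1 H2 hB0 lB0 fB0.
have inj : {in F &, injective f}.
  move=> B B' hB hB' e; apply/eqP; apply: contraT => ne.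
  by have := H2 B B' hB hB' ne; rewrite e setIid; lia.
split.
- move=> A /imsetP [B hB ->]; case: (H1 B hB) => [->|->] //; exact: hle.
- move=> A A' /imsetP[B hB ->] /imsetP[B' hB' ->] ne; apply: H2 => //.
  by apply: contraNneq ne => ->.
- exact: card_in_imset.
rewrite /dfc.
apply: (@leq_ltn_trans #|[set B in F | #|f B| < 4]|).
  apply: leq_trans (leq_imset_card f _); apply: subset_leq_card.
  apply/subsetP => A; rewrite inE => /andP [/imsetP [B hB ->] lt].
  by apply/imsetP; exists B => //; rewrite inE hB lt.
apply: proper_card; apply/properP; split.
  apply/subsetP => B; rewrite !inE => /andP [hB lt]; rewrite hB /=.
  by case: (H1 B hB) lt => [->|->].
by exists B0; rewrite !inE ?hB0 ?lB0 ?fB0.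
Qed.
Definition improves n (F : {set {set 'I_n}}) :=
  exists G : {set {set 'I_n}}, [/\ le4 G, okF G, #|G| = #|F| & dfc G < dfc F].

Lemma step' n (F : {set {set 'I_n}}) (f : {set 'I_n} -> {set 'I_n}) B0 :
 le4 F -> okF F ->
 (forall B, B \in F -> #|f B| = 4 \/ f B = B) ->
 (forall B B', B \in F -> B' \in F -> B != B' -> 6 + 2 * #|f B :&: f B'| <= #|f B| + #|f B'|) ->
 B0 \in F -> #|B0| < 4 -> #|f B0| = 4 -> improves F.
Proof.
move=> h1 h2 h3 h4 h5 h6 h7; exists (f @: F); exact: (step h1 h2 h3 h4 h5 h6 h7).
Qed.

Lemma ge2 n (F : {set {set 'I_n}}) B : le4 F -> okF F -> 1 < #|F| -> B \in F -> 2 <= #|B|.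
Proof.
move=> hle hok /card_gt1P [x [y [hx hy hxy]]] hB.
have [B' [hB' ne]] : exists B', B' \in F /\ B != B'.
  case: (eqVneq B x) => [eBx|neBx]; last by exists x.
  by exists y; split => //; rewrite eBx.
have := hok B B' hB hB' ne; have := hle B' hB'; lia.
Qed.

Lemma cardU1I (T : finType) (c : T) (A B : {set T}) : #|(c |: A) :&: B| <= 1 + #|A :&: B|.
Proof.
apply: (@leq_trans #|c |: (A :&: B)|); last by rewrite cardsU1; case: (_ \notin _).
apply: subset_leq_card; apply/subsetP => e; rewrite !inE.
by case: (e == c) => //= /andP [-> ->].
Qed.

Lemma setU1I_notin (T : finType) (c : T) (A B : {set T}) : c \notin B -> (c |: A) :&: B = A :&: B.
Proof.
move=> cB; apply/setP => e; rewrite !inE; case: eqP => //= ->.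
by rewrite (negbTE cB) andbF.
Qed.

Lemma imp3a n (F : {set {set 'I_n}}) A0 c : le4 F -> okF F -> A0 \in F -> #|A0| = 3 ->
  (forall B, B \in F -> #|B| < 4 -> c \notin B) -> improves F.
Proof.
move=> hle hok hA0 sA0 fresh.
have cA0 : c \notin A0 by apply: fresh => //; rewrite sA0.
have sN : #|c |: A0| = 4 by rewrite cardsU1 cA0 sA0.
have key : forall B, B \in F -> B != A0 -> 6 + 2 * #|(c |: A0) :&: B| <= 4 + #|B|.
  move=> B hB ne; have k := hok A0 B hA0 hB (ltac:(by rewrite eq_sym)).
  rewrite sA0 in k; have := hle B hB; rewrite leq_eqVlt => /orP [/eqP e4|lt4].
    have := cardU1I c A0 B; lia.
  by rewrite setU1I_notin ?fresh //; lia.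
apply: (@step' _ F (fun B => if B == A0 then c |: A0 else B) A0) => //.
- by move=> B hB; case: eqP => _; [left|right].
- move=> B B' hB hB' ne.
  case: (eqVneq B A0) => [eB|nB]; case: (eqVneq B' A0) => [eB'|nB'].
  + by rewrite eB eB' eqxx in ne.
  + by rewrite sN; apply: key.
  + by rewrite setIC sN [#|B| + _]addnC; apply: key.
  + exact: hok.
- by rewrite sA0.
- by rewrite eqxx.
Qed.
Lemma inter0 (T : finType) (X Y : {set T}) :
  (forall e, e \in X -> e \in Y -> False) -> #|X :&: Y| = 0.
Proof.
move=> H; apply/eqP; rewrite cards_eq0; apply/eqP/setP => e; rewrite !inE.
by apply/negbTE/negP => /andP [h1 h2]; apply: (H e).
Qed.

Lemma inter1 (T : finType) (X Y : {set T}) z :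
  (forall e, e \in X -> e \in Y -> e = z) -> #|X :&: Y| <= 1.
Proof.
move=> H; apply: card_le1 => e e'; rewrite !inE => /andP [h1 h2] /andP [h3 h4].
by rewrite (H e) // (H e').
Qed.

Lemma tri_disj n (F : {set {set 'I_n}}) T B e : le4 F -> okF F ->
  T \in F -> #|T| = 3 -> B \in F -> T != B -> e \in T -> e \in B -> False.
Proof.
move=> hle hok hT sT hB ne; apply: disj_inter.
have := hok T B hT hB ne; have := hle B hB; lia.
Qed.

Lemma fin1 x : x <= 1 -> 6 + 2 * x <= 4 + 4.
Proof. lia. Qed.
Lemma fin0 x y : x = 0 -> 2 <= y -> 6 + 2 * x <= 4 + y.
Proof. lia. Qed.
Lemma fin0' x y : x = 0 -> 2 <= y -> 6 + 2 * x <= y + 4.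
Proof. lia. Qed.

Lemma imp3b n (F : {set {set 'I_n}}) A0 A2 A3 c c' c1 : le4 F -> okF F -> 1 < #|F| ->
  A0 \in F -> A2 \in F -> A3 \in F -> #|A0| = 3 -> #|A2| = 3 -> #|A3| = 3 ->
  c \in A2 -> c \notin A0 -> c' \in A3 -> c' \notin A0 -> c' \notin A2 -> c1 \in A0 ->
  improves F.
Proof.
move=> hle hok h2 hA0 hA2 hA3 s0 s2 s3 cA2 cA0 c'A3 c'A0 c'A2 c1A0.
have d := tri_disj hle hok.
have n02 : A0 != A2 by apply: contraNneq cA0 => ->.
have n03 : A0 != A3 by apply: contraNneq c'A0 => ->.
have n23 : A2 != A3 by apply: contraNneq c'A2 => ->.
have c1A3 : c1 \notin A3 by apply/negP => h; apply: (d A0 A3 c1).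
have sN0 : #|c |: A0| = 4 by rewrite cardsU1 cA0 s0.
have sN2 : #|c' |: A2| = 4 by rewrite cardsU1 c'A2 s2.
have sN3 : #|c1 |: A3| = 4 by rewrite cardsU1 c1A3 s3.
have i02 : #|(c |: A0) :&: (c' |: A2)| <= 1.
  apply: (@inter1 _ _ _ c) => e; rewrite !inE => /orP [/eqP -> //|e0] /orP [/eqP ee|e2].
    by rewrite -ee e0 in c'A0.
  by case: (d A0 A2 e).
have i23 : #|(c' |: A2) :&: (c1 |: A3)| <= 1.
  apply: (@inter1 _ _ _ c') => e; rewrite !inE => /orP [/eqP -> //|e2] /orP [/eqP ee|e3].
    by case: (d A0 A2 e) => //; rewrite ee.
  by case: (d A2 A3 e).
have i03 : #|(c |: A0) :&: (c1 |: A3)| <= 1.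
  apply: (@inter1 _ _ _ c1) => e; rewrite !inE => /orP [/eqP ee|e0] /orP [/eqP -> //|e3].
    by case: (d A2 A3 e) => //; rewrite ee.
  by case: (d A0 A3 e).
pose f B := if B == A0 then c |: A0 else if B == A2 then c' |: A2
            else if B == A3 then c1 |: A3 else B.
have sel : forall X, X \in F -> [\/ X = A0 /\ f X = c |: A0, X = A2 /\ f X = c' |: A2,
   X = A3 /\ f X = c1 |: A3 |
   [/\ f X = X, #|(c |: A0) :&: X| = 0, #|(c' |: A2) :&: X| = 0,
       #|(c1 |: A3) :&: X| = 0 & 2 <= #|X| ] ].
  move=> X hX; rewrite /f.
  case: (eqVneq X A0) => [->|x0]; first by constructor 1.
  case: (eqVneq X A2) => [->|x2]; first by constructor 2.
  case: (eqVneq X A3) => [->|x3].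
    by constructor 3.
  constructor 4; split => //; try (apply: inter0 => e; rewrite !inE).
  - move=> /orP [/eqP -> |e0] eX; first by apply: (d A2 X c) => //; rewrite eq_sym.
    by apply: (d A0 X e) => //; rewrite eq_sym.
  - move=> /orP [/eqP -> |e0] eX; first by apply: (d A3 X c') => //; rewrite eq_sym.
    by apply: (d A2 X e) => //; rewrite eq_sym.
  - move=> /orP [/eqP -> |e0] eX; first by apply: (d A0 X c1) => //; rewrite eq_sym.
    by apply: (d A3 X e) => //; rewrite eq_sym.
  - exact: ge2 hle hok h2 hX.
apply: (@step' _ F f A0) => //.
- move=> B hB; case: (sel B hB) => [[_ ->]|[_ ->]|[_ ->]|[-> _ _ _ _]]; by [left|right].
- move=> B B' hB hB' ne.
  case: (sel B hB) => [[eB ->]|[eB ->]|[eB ->]|[-> o0 o2 o3 g]];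
  case: (sel B' hB') => [[eB' ->]|[eB' ->]|[eB' ->]|[-> o0' o2' o3' g']];
  rewrite ?sN0 ?sN2 ?sN3;
  try (by move: ne; rewrite eB eB' eqxx);
  try (by apply: hok);
  first [ apply: fin1; first [assumption | rewrite setIC; assumption]
        | apply: fin0; [first [assumption | rewrite setIC; assumption] | assumption]
        | apply: fin0'; [first [assumption | rewrite setIC; assumption] | assumption]].
- by rewrite s0.
- by rewrite /f eqxx.
Qed.
Ltac brk := repeat match goal with
 | H : is_true (_ || _) |- _ => case/orP: H => H
 | H : is_true (_ && _) |- _ => case/andP: H => ? ?
 | H : is_true (~~ (_ || _)) |- _ => rewrite negb_or in H
 | H : is_true (?u == ?v) |- _ => move/eqP: H => H; subst
 end.

Ltac cls := solve [ done
 | match goal with H : is_true (~~ (?u == ?u)) |- _ => by rewrite eqxx in H end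
 | match goal with H : is_true ?t, H' : is_true (~~ ?t) |- _ => by rewrite H in H' end
 | match goal with H : is_true (~~ (?s && ?t)), H1 : is_true ?s, H2 : is_true ?t |- _ => by rewrite H1 H2 in H end ].

Ltac useI := match goal with
 | I : forall e, is_true (e \in ?X) -> is_true (e \in ?Y) -> e = ?z,
   H1 : is_true (?v \in ?X), H2 : is_true (?v \in ?Y) |- _ =>
     lazymatch v with z => fail | _ => have := I v H1 H2; let E := fresh in move=> E; subst end
 | J : forall e e', is_true (e \in ?X) -> is_true (e \in ?Y) -> is_true (e' \in ?X) -> is_true (e' \in ?Y) -> e = e',
   H1 : is_true (?v \in ?X), H2 : is_true (?v \in ?Y),
   H3 : is_true (?w \in ?X), H4 : is_true (?w \in ?Y) |- _ =>
     lazymatch v with w => fail | _ => have := J v w H1 H2 H3 H4; let E := fresh in move=> E; subst end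
 end.

Ltac crunch := brk; repeat (useI; brk); try cls.

Lemma imp2a n (F : {set {set 'I_n}}) p c d : le4 F -> okF F -> p \in F -> #|p| = 2 ->
  c != d -> c \notin p -> d \notin p ->
  (forall B, B \in F -> ~~ ((c \in B) && (d \in B))) -> improves F.
Proof.
move=> hle hok hp sp cd cp dp cov.
have oth : forall B, B \in F -> B != p -> #|B| = 4 /\ forall e, e \in p -> e \in B -> False.
  move=> B hB ne; have k := hok p B hp hB (ltac:(by rewrite eq_sym)).
  have := hle B hB; rewrite sp in k; split; first lia.
  by move=> e; apply: disj_inter; lia.
have sN : #|c |: (d |: p)| = 4.
  rewrite cardsU1 cardsU1 dp sp !inE negb_or cd cp; done.
have key : forall B, B \in F -> B != p -> #|(c |: (d |: p)) :&: B| <= 1.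
  move=> B hB ne; have [_ dj] := oth B hB ne; have cvB := cov B hB.
  apply: card_le1 => e e'; rewrite !inE => H1 H2.
  crunch.
  all: try (by case: (dj _ ltac:(eassumption) ltac:(eassumption))).
apply: (@step' _ F (fun B => if B == p then c |: (d |: p) else B) p) => //.
- by move=> B hB; case: eqP => _; [left|right].
- move=> B B' hB hB' ne.
  case: (eqVneq B p) => [eB|nB]; case: (eqVneq B' p) => [eB'|nB'].
  + by rewrite eB eB' eqxx in ne.
  + rewrite sN (proj1 (oth B' hB' nB')); apply: fin1; exact: key.
  + rewrite sN (proj1 (oth B hB nB)) setIC; apply: fin1; exact: key.
  + exact: hok.
- by rewrite sp.
- by rewrite eqxx.
Qed.
Lemma fin1' x : x <= 1 -> 6 + 2 * x <= 4 + 4.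
Proof. lia. Qed.

Lemma imp2b n (F : {set {set 'I_n}}) p1 p2 B1 B2 B3 x a b :
  le4 F -> okF F -> [set p1; p2] \in F -> p1 != p2 ->
  B1 \in F -> B2 \in F -> B3 \in F -> B1 != [set p1; p2] -> B2 != [set p1; p2] -> B1 != B2 ->
  x \in B1 -> x \in B2 -> a \in B1 -> a != x -> b \in B2 -> b != x -> a \in B3 -> b \in B3 ->
  improves F.
Proof.
move=> hle hok hp p12 hB1 hB2 hB3 n1p n2p n12 x1 x2 a1 ax b2 bx a3 b3.
pose p := [set p1; p2]. have ep : p = [set p1; p2] by [].
rewrite -ep in hp n1p n2p. clearbody p.
have sp : #|p| = 2 by rewrite ep cards2 p12.
have oth : forall B, B \in F -> B != p -> [/\ #|B| = 4, p1 \notin B & p2 \notin B].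
  move=> B hB ne; have k := hok p B hp hB (ltac:(by rewrite eq_sym)).
  have l4 := hle B hB; rewrite sp in k.
  have k0 : #|p :&: B| = 0 by move: k l4; clear; lia.
  have s4 : #|B| = 4 by move: k l4; clear; lia.
  split => //.
    by apply/negP => h; apply: (@disj_inter _ p B p1 k0) => //; rewrite ep !inE eqxx.
  by apply/negP => h; apply: (@disj_inter _ p B p2 k0) => //; rewrite ep !inE eqxx orbT.
have lB : forall B B', B \in F -> B' \in F -> B != p -> B' != p -> B != B' ->
    forall e e', e \in B -> e \in B' -> e' \in B -> e' \in B' -> e = e'.
  move=> B B' hB hB' np np' ne e e'; apply: le1_inter.
  have := hok B B' hB hB' ne; case: (oth B hB np) => -> _ _; case: (oth B' hB' np') => -> _ _.
  clear; lia.
have I12 : forall e, e \in B1 -> e \in B2 -> e = x.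
  by move=> e h1 h2; apply: (lB B1 B2).
have a2 : a \notin B2 by apply/negP => h; move: ax; rewrite (I12 a) ?eqxx.
have b1 : b \notin B1 by apply/negP => h; move: bx; rewrite (I12 b) ?eqxx.
have ab : a != b by apply: contraNneq a2 => ->.
have [s1 p1B1 p2B1] := oth B1 hB1 n1p.
have [s2 p1B2 p2B2] := oth B2 hB2 n2p.
have n3p : B3 != p by apply: contraTneq a3 => ->; rewrite ep !inE; apply/negP => /orP [] /eqP e;
  [move: p1B1 | move: p2B1]; rewrite -e a1.
have [s3 p1B3 p2B3] := oth B3 hB3 n3p.
have n13 : B1 != B3 by apply: contraNneq b1 => ->.
have n23 : B2 != B3 by apply: contraNneq a2 => ->.
have I13 : forall e, e \in B1 -> e \in B3 -> e = a.
  by move=> e h1 h2; apply: (lB B1 B3).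
have I23 : forall e, e \in B2 -> e \in B3 -> e = b.
  by move=> e h1 h2; apply: (lB B2 B3).
have x3 : x \notin B3 by apply/negP => h; move: ax; rewrite (I13 x) ?eqxx.
pose P' := p :|: (B3 :\: [set a; b]).
pose B1' := p1 |: (B1 :\ x).
pose B2' := p1 |: (B2 :\ x).
pose B3' := p2 |: (x |: (a |: [set b])).
have eP : P' = p :|: (B3 :\: [set a; b]) by [].
have eB1 : B1' = p1 |: (B1 :\ x) by [].
have eB2 : B2' = p1 |: (B2 :\ x) by [].
have eB3 : B3' = p2 |: (x |: (a |: [set b])) by [].
clearbody P' B1' B2' B3'.
have sP : #|P'| = 4.
  rewrite eP cardsU sp cardsD s3.
  have -> : B3 :&: [set a; b] = [set a; b].
    by apply/setIidPr/subsetP => e; rewrite !inE => /orP [] /eqP ->.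
  rewrite cards2 ab.
  have -> : #|p :&: (B3 :\: [set a; b])| = 0.
    apply: inter0 => e; rewrite ep !inE => /orP [] /eqP -> /andP [_ h].
      by move: p1B3; rewrite h.
    by move: p2B3; rewrite h.
  by [].
have sB1 : #|B1'| = 4.
  rewrite eB1 cardsU1 !inE (negbTE p1B1) andbF /=.
  by have := cardsD1 x B1; rewrite x1 s1 => ->.
have sB2 : #|B2'| = 4.
  rewrite eB2 cardsU1 !inE (negbTE p1B2) andbF /=.
  by have := cardsD1 x B2; rewrite x2 s2 => ->.
have sB3 : #|B3'| = 4.
  rewrite eB3 cardsU1 cardsU1 cardsU1 cards1 !inE.
  have -> : (p2 == x) = false by apply/negbTE; apply: contraNneq p2B1 => ->.
  have -> : (p2 == a) = false by apply/negbTE; apply: contraNneq p2B1 => ->.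
  have -> : (p2 == b) = false by apply/negbTE; apply: contraNneq p2B2 => ->.
  have -> : (x == a) = false by apply/negbTE; rewrite eq_sym.
  have -> : (x == b) = false by apply/negbTE; rewrite eq_sym.
  by rewrite ab.
have J12 := lB B1 B2 hB1 hB2 n1p n2p n12.
have J13 := lB B1 B3 hB1 hB3 n1p n3p n13.
have J23 := lB B2 B3 hB2 hB3 n2p n3p n23.
have iP1 : #|P' :&: B1'| <= 1.
  apply: (@inter1 _ _ _ p1) => e; rewrite ?eP ?eB1 ?eB2 ?eB3 ?ep !inE => H1 H2; crunch.
have iP2 : #|P' :&: B2'| <= 1.
  apply: (@inter1 _ _ _ p1) => e; rewrite ?eP ?eB1 ?eB2 ?eB3 ?ep !inE => H1 H2; crunch.
have iP3 : #|P' :&: B3'| <= 1.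
  apply: (@inter1 _ _ _ p2) => e; rewrite ?eP ?eB1 ?eB2 ?eB3 ?ep !inE => H1 H2; crunch.
have i12 : #|B1' :&: B2'| <= 1.
  apply: (@inter1 _ _ _ p1) => e; rewrite ?eP ?eB1 ?eB2 ?eB3 ?ep !inE => H1 H2; crunch.
have i13 : #|B1' :&: B3'| <= 1.
  apply: (@inter1 _ _ _ a) => e; rewrite ?eP ?eB1 ?eB2 ?eB3 ?ep !inE => H1 H2; crunch.
have i23 : #|B2' :&: B3'| <= 1.
  apply: (@inter1 _ _ _ b) => e; rewrite ?eP ?eB1 ?eB2 ?eB3 ?ep !inE => H1 H2; crunch.
pose f B := if B == p then P' else if B == B1 then B1' else if B == B2 then B2'
            else if B == B3 then B3' else B.
have sel : forall X, X \in F -> [\/ X = p /\ f X = P', X = B1 /\ f X = B1',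
   X = B2 /\ f X = B2' | (X = B3 /\ f X = B3') \/
   [/\ f X = X, #|X| = 4 & [/\ #|P' :&: X| <= 1, #|B1' :&: X| <= 1, #|B2' :&: X| <= 1
       & #|B3' :&: X| <= 1 ] ] ].
  move=> X hX; rewrite /f.
  case: (eqVneq X p) => [->|xp]; first by constructor 1.
  case: (eqVneq X B1) => [->|x1']; first by constructor 2.
  case: (eqVneq X B2) => [->|x2']; first by constructor 3.
  case: (eqVneq X B3) => [->|x3']; first by constructor 4; left.
  constructor 4; right.
  have [sX p1X p2X] := oth X hX xp.
  have JX1 := lB B1 X hB1 hX n1p xp (ltac:(by rewrite eq_sym)).
  have JX2 := lB B2 X hB2 hX n2p xp (ltac:(by rewrite eq_sym)).
  have JX3 := lB B3 X hB3 hX n3p xp (ltac:(by rewrite eq_sym)).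
  split => //; split; apply: card_le1 => e e'; rewrite ?eP ?eB1 ?eB2 ?eB3 ?ep !inE => H1 H2; crunch.
apply: (@step' _ F f p) => //.
- move=> B hB; case: (sel B hB) => [[_ ->]|[_ ->]|[_ ->]|[[_ ->]|[-> _ _]]]; by [left|right].
- move=> B B' hB hB' ne.
  case: (sel B hB) => [[eB ->]|[eB ->]|[eB ->]|[[eB ->]|[-> g [o0 o1 o2 o3]]]];
  case: (sel B' hB') => [[eB' ->]|[eB' ->]|[eB' ->]|[[eB' ->]|[-> g' [o0' o1' o2' o3']]]];
  try (by apply: hok);
  rewrite ?sP ?sB1 ?sB2 ?sB3 ?g ?g';
  try (by move: ne; rewrite eB eB' eqxx);
  apply: fin1'; first [assumption | rewrite setIC; assumption].
- by rewrite sp.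
- by rewrite /f eqxx.
Qed.
Lemma exists_out n (S : {set 'I_n}) : #|S| < n -> exists c, c \notin S.
Proof.
move=> h; have := cardsC S; rewrite card_ord => e.
have : 0 < #|~: S| by move: h e; clear; lia.
by case/card_gt0P => c; rewrite inE => hc; exists c.
Qed.

Lemma oth2 n (F : {set {set 'I_n}}) p B : le4 F -> okF F -> p \in F -> #|p| = 2 ->
  B \in F -> B != p -> #|B| = 4 /\ #|p :&: B| = 0.
Proof.
move=> hle hok hp sp hB ne; have k := hok p B hp hB (ltac:(by rewrite eq_sym)).
have l4 := hle B hB; rewrite sp in k; move: k l4; clear; lia.
Qed.

Lemma improve n (F : {set {set 'I_n}}) A0 : 7 <= n -> le4 F -> okF F -> 1 < #|F| ->
  A0 \in F -> #|A0| < 4 -> improves F.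
Proof.
move=> hn hle hok h2 hA0 lA0.
have g2 := ge2 hle hok h2 hA0.
have [s3|s2] : #|A0| = 3 \/ #|A0| = 2 by move: g2 lA0; clear; lia.
- case: (pickP (fun c : 'I_n => [forall B in F, (#|B| < 4) ==> (c \notin B)])) => [c Hc|Hn].
    apply: (imp3a hle hok hA0 s3 (c := c)) => B hB lt.
    by move/forall_inP: Hc => Hc; exact: (implyP (Hc B hB) lt).
  have cov : forall c, exists B, [/\ B \in F, #|B| = 3 & c \in B].
    move=> c; move: (Hn c) => /negbT/forall_inPn [B hB]; rewrite negb_imply negbK.
    move=> /andP [lt cB]; exists B; split => //.
    case: (eqVneq B A0) => [->//|ne].
    have k := hok A0 B hA0 hB (ltac:(by rewrite eq_sym)); rewrite s3 in k.
    by move: k lt; clear; lia.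
  have [c cA0] := exists_out (ltac:(rewrite s3; move: hn; clear; lia) : #|A0| < n).
  have [A2 [hA2 s2 cA2]] := cov c.
  have [c' c'A] : exists c', c' \notin A0 :|: A2.
    apply: exists_out; have := cardsU A0 A2; rewrite s3 s2; move: hn; clear; lia.
  rewrite inE negb_or in c'A; case/andP: c'A => c'A0 c'A2.
  have [A3 [hA3 s3' c'A3]] := cov c'.
  have [c1 c1A0] : exists c1, c1 \in A0 by apply/card_gt0P; rewrite s3.
  exact: (imp3b hle hok h2 hA0 hA2 hA3 s3 s2 s3' cA2 cA0 c'A3 c'A0 c'A2 c1A0).
- case: (boolP [exists c, exists d, [&& c != d, c \notin A0, d \notin A0 &
      [forall B in F, ~~ ((c \in B) && (d \in B))]]]) => [H|H].
    case/existsP: H => c /existsP [d /and4P [cd cp dp /forall_inP cv]].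
    exact: (imp2a hle hok hA0 s2 cd cp dp cv).
  have cov : forall c d, c != d -> c \notin A0 -> d \notin A0 ->
      exists2 B, B \in F & (c \in B) && (d \in B).
    move=> c d h1 h3 h4; apply/exists_inP; apply: contraNT H => hnx.
    apply/existsP; exists c; apply/existsP; exists d; rewrite h1 h3 h4 /=.
    apply/forall_inP => B hB; apply/negP => hcd; apply: (negP hnx).
    by apply/exists_inP; exists B.
  have [p1 [p2 [p12 ep]]] : exists p1 p2, p1 != p2 /\ A0 = [set p1; p2] by apply/cards2P; rewrite s2.
  have O := oth2 hle hok hA0 s2.
  have dj : forall B e, B \in F -> B != A0 -> e \in B -> e \notin A0.
    move=> B e hB ne eB; apply/negP => eA; have [_ k] := O B hB ne.
    by apply: (disj_inter k eA eB).
  have [B1 [hB1 n1]] : exists B1, B1 \in F /\ B1 != A0.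
    case/card_gt1P: h2 => u [v [hu hv huv]].
    case: (eqVneq u A0) => [eu|neu]; last by exists u.
    by exists v; split => //; rewrite -eu eq_sym.
  have [s1 _] := O B1 hB1 n1.
  have [x x1] : exists x, x \in B1 by apply/card_gt0P; rewrite s1.
  have [z zz] : exists z, z \notin B1 :|: A0.
    apply: exists_out; have := cardsU B1 A0; rewrite s1 s2; move: hn; clear; lia.
  rewrite inE negb_or in zz; case/andP: zz => zB1 zA0.
  have xz : x != z by apply: contraNneq zB1 => <-.
  have [B2 hB2 /andP [x2 z2]] := cov x z xz (dj B1 x hB1 n1 x1) zA0.
  have n2 : B2 != A0 by apply: contraTneq x2 => ->; exact: (dj B1 x hB1 n1 x1).
  have n12 : B1 != B2 by apply: contraNneq zB1 => ->.
  have [s2' _] := O B2 hB2 n2.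
  have [a aa] : exists a, a \in B1 :\ x.
    by apply/card_gt0P; have := cardsD1 x B1; rewrite x1 s1; clear; lia.
  have [b bb] : exists b, b \in B2 :\ x.
    by apply/card_gt0P; have := cardsD1 x B2; rewrite x2 s2'; clear; lia.
  rewrite !inE in aa; rewrite !inE in bb; case/andP: aa => ax a1; case/andP: bb => bx b2.
  have k12 : #|B1 :&: B2| <= 1.
    have := hok B1 B2 hB1 hB2 n12; rewrite s1 s2'; clear; lia.
  have ab : a != b.
    apply/negP => /eqP eab; have a2 : a \in B2 by rewrite eab.
    have e := le1_inter k12 a1 a2 x1 x2.
    by move: ax; rewrite e eqxx.
  have [B3 hB3 /andP [a3 b3]] := cov a b ab (dj B1 a hB1 n1 a1) (dj B2 b hB2 n2 b2).
  rewrite ep in hA0 n1 n2.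
  exact: (imp2b hle hok hA0 p12 hB1 hB2 hB3 n1 n2 n12 x1 x2 a1 ax b2 bx a3 b3).
Qed.
Lemma all4 n (F : {set {set 'I_n}}) : le4 F -> dfc F = 0 -> forall A, A \in F -> #|A| = 4.
Proof.
move=> hle d0 A hA; have l4 := hle A hA.
case: (ltngtP #|A| 4) => // lt; last by move: lt l4; clear; lia.
have : 0 < dfc F by apply/card_gt0P; exists A; rewrite inE hA lt.
by rewrite d0.
Qed.

Lemma core n : 7 <= n -> forall k (F : {set {set 'I_n}}), dfc F <= k -> le4 F -> okF F -> 1 < #|F| ->
  exists G : {set {set 'I_n}}, [/\ (forall A, A \in G -> #|A| = 4), okF G & #|F| <= #|G|].
Proof.
move=> hn; elim => [|k IH] F hd hle hok h2.
  by exists F; split => //; apply: all4 => //; move: hd; clear; lia.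
case: (posnP (dfc F)) => [d0|dpos]; first by exists F; split => //; apply: all4.
have [A0] : exists A0, A0 \in [set A in F | #|A| < 4] by apply/card_gt0P.
rewrite inE => /andP [hA0 lt].
have [G' [hle' hok' hc' hd']] := improve hn hle hok h2 hA0 lt.
have [G [h4 hokG hcG]] := IH G' (ltac:(move: hd' hd; clear; lia)) hle' hok' (ltac:(by rewrite hc')).
by exists G; split => //; rewrite -hc'.
Qed.

Lemma fromS n (S : {set word n}) : [forall u in S, wt u <= 4] -> min_dist_ge 6 S ->
  [/\ le4 ((@sup n) @: S), okF ((@sup n) @: S) & #|(@sup n) @: S| = #|S|].
Proof.
move=> /forall_inP hw /forall_inP md; split.
- by move=> A /imsetP [u hu ->]; rewrite -wtE; apply: hw.
- move=> A B /imsetP [u hu ->] /imsetP [v hv ->] ne.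
  have nuv : u != v by apply: contraNneq ne => ->.
  have := md u hu => /forall_inP /(_ v hv) /implyP /(_ nuv) h.
  have := hdistE u v; move: h; clear; lia.
- apply: card_imset; apply: (can_inj (g := @wd n)) => u; exact: wd_sup.
Qed.

Lemma toT n (G : {set {set 'I_n}}) : (forall A, A \in G -> #|A| = 4) -> okF G ->
  admissible 6 4 ((@wd n) @: G) /\ #|(@wd n) @: G| = #|G|.
Proof.
move=> h4 hok; split.
  apply/andP; split.
    by apply/forall_inP => u /imsetP [A hA ->]; rewrite wtE sup_wd h4.
  apply/forall_inP => u /imsetP [A hA ->]; apply/forall_inP => v /imsetP [B hB ->].
  apply/implyP => ne; have neAB : A != B by apply: contraNneq ne => ->.
  have := hdistE (wd A) (wd B); rewrite !sup_wd; have := hok A B hA hB neAB.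
  clear; lia.
apply: card_imset; apply: (can_inj (g := @sup n)) => A; exact: sup_wd.
Qed.

Lemma hdist_le n (u v : word n) : hdist u v <= n.
Proof. by rewrite /hdist; apply: leq_trans (max_card _) _; rewrite card_ord. Qed.

Definition W4 n (h : 4 <= n) : {set 'I_n} := [set widen_ord h i | i : 'I_4].

Lemma W4card n (h : 4 <= n) : #|W4 h| = 4.
Proof.
rewrite /W4 card_imset ?card_ord //.
by move=> i j /(congr1 val) /= /val_inj.
Qed.

Lemma A_ge1 n : 4 <= n -> 1 <= A n 6 4.
Proof.
move=> h; have [adm _] := @toT n [set W4 h] (fun A hA => ltac:(by rewrite (set1P hA) W4card))
  (fun A B hA hB ne => ltac:(by rewrite (set1P hA) (set1P hB) eqxx in ne)).
apply: leq_trans (leq_bigmax_cond _ adm).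
by rewrite card_imset ?cards1 //; apply: (can_inj (g := @sup n)) => A; exact: sup_wd.
Qed.

Lemma okF_n n (F : {set {set 'I_n}}) A B : okF F -> A \in F -> B \in F -> A != B ->
  6 + 2 * #|A :&: B| <= #|A| + #|B| /\ #|A| + #|B| <= n + #|A :&: B|.
Proof.
move=> hok hA hB ne; split; first exact: hok.
have := cardsUI A B; have := max_card (A :|: B); rewrite card_ord; clear; lia.
Qed.

Lemma part1 n : 0 < n -> n \notin [:: 1; 2; 3; 6] -> A' n 6 4 = A n 6 4.
Proof.
move=> n0 hn.
have h4 : 4 <= n by move: n0 hn; case: n => [|[|[|[|n]]]].
have n6 : n != 6 by apply: contraNneq hn => ->.
apply/eqP; rewrite eqn_leq; apply/andP; split.
  apply/bigmax_leqP => S /and3P [ne hw md].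
  have [hle hok hc] := fromS hw md.
  case: (leqP #|S| 1) => h1; first by apply: leq_trans h1 (A_ge1 h4).
  rewrite -hc in h1.
  have hn7 : 7 <= n.
    case/card_gt1P: h1 => X [Y [hX hY nXY]].
    have [k1 k2] := okF_n hok hX hY nXY; move: k1 k2 n6; clear; lia.
  have [G [g4 gok gc]] := core hn7 (leqnn _) hle hok h1.
  have [adm tc] := toT g4 gok.
  by rewrite -hc; apply: leq_trans gc _; rewrite -tc; apply: leq_bigmax_cond.
apply/bigmax_leqP => T /andP [hw md].
case: (eqVneq T set0) => [->|ne]; first by rewrite cards0.
apply: leq_bigmax_cond; rewrite /admissible' ne md andbT /=.
by apply/forall_inP => u hu; move/forall_inP: hw => /(_ u hu) /eqP ->.
Qed.

Lemma part2 n : n \in [:: 1; 2; 3] -> A' n 6 4 = 1.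
Proof.
move=> hn; have h3 : n <= 3 by move: hn; rewrite !inE => /or3P [] /eqP ->.
apply/eqP; rewrite eqn_leq; apply/andP; split.
  apply/bigmax_leqP => S /and3P [_ _ /forall_inP md].
  rewrite leqNgt; apply/negP => /card_gt1P [u [v [hu hv ne]]].
  have := md u hu => /forall_inP /(_ v hv) /implyP /(_ ne) h.
  by have := hdist_le u v; move: h h3; clear; lia.
have adm : admissible' 6 4 [set wd (set0 : {set 'I_n})].
  rewrite /admissible'; apply/and3P; split.
  - by apply/set0Pn; exists (wd set0); rewrite inE.
  - by apply/forall_inP => u /set1P ->; rewrite wtE sup_wd cards0.
  - apply/forall_inP => u /set1P ->; apply/forall_inP => v /set1P ->.
    by rewrite eqxx.
by apply: leq_trans (leq_bigmax_cond _ adm); rewrite cards1.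
Qed.
Definition L6 : {set 'I_(3+3)} := [set lshift 3 i | i : 'I_3].
Definition R6 : {set 'I_(3+3)} := [set rshift 3 i | i : 'I_3].

Lemma L6c : #|L6| = 3.
Proof. by rewrite /L6 card_imset ?card_ord //; exact: lshift_inj. Qed.
Lemma R6c : #|R6| = 3.
Proof. by rewrite /R6 card_imset ?card_ord //; exact: rshift_inj. Qed.
Lemma LR6 : #|L6 :&: R6| = 0.
Proof.
apply: inter0 => e /imsetP [i _ ->] /imsetP [j _ /eqP].
by rewrite eq_lrshift.
Qed.

Lemma part3 : A' 6 6 4 = 2.
Proof.
apply/eqP; rewrite eqn_leq; apply/andP; split.
  apply/bigmax_leqP => S /and3P [_ hw md].
  have [hle hok hc] := fromS hw md.
  rewrite -hc leqNgt; apply/negP => h3.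
  have [A hA] : exists A, A \in (@sup 6) @: S by apply/card_gt0P; move: h3; clear; lia.
  have : 1 < #|(@sup 6) @: S :\ A| by have := cardsD1 A ((@sup 6) @: S); rewrite hA; move: h3; clear; lia.
  case/card_gt1P => B [C [hB hC nBC]]; rewrite !inE in hB hC.
  case/andP: hB => nBA hB; case/andP: hC => nCA hC.
  have [k1 k2] := okF_n hok hA hB (ltac:(by rewrite eq_sym)).
  have [k3 k4] := okF_n hok hA hC (ltac:(by rewrite eq_sym)).
  have [k5 k6] := okF_n hok hB hC nBC.
  have u1 := cardsUI A B.
  have u2 := cardsUI (A :|: B) C.
  have u3 : #|(A :|: B) :&: C| <= #|A :&: C| + #|B :&: C|.
    by rewrite setIUl; have := cardsU (A :&: C) (B :&: C); clear; lia.
  have := max_card (A :|: B :|: C); rewrite card_ord.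
  move: k1 k2 k3 k4 k5 k6 u1 u2 u3; clear; lia.
have adm : admissible' 6 4 [set wd L6; wd R6].
  rewrite /admissible'; apply/and3P; split.
  - by apply/set0Pn; exists (wd L6); rewrite !inE eqxx.
  - by apply/forall_inP => u; rewrite !inE => /orP [] /eqP ->; rewrite wtE sup_wd ?L6c ?R6c.
  - apply/forall_inP => u hu; apply/forall_inP => v hv; apply/implyP => ne.
    move: hu hv ne; rewrite !inE => /orP [] /eqP -> /orP [] /eqP ->; rewrite ?eqxx // => _.
      by have := hdistE (wd L6) (wd R6); rewrite !sup_wd L6c R6c LR6; lia.
    by have := hdistE (wd R6) (wd L6); rewrite !sup_wd L6c R6c setIC LR6; lia.
apply: leq_trans (leq_bigmax_cond _ adm).
rewrite cards2.
have -> : wd L6 != wd R6.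
  apply/negP => /eqP e; have := congr1 (@sup 6) e; rewrite !sup_wd => eLR.
  by have := LR6; rewrite eLR setIid R6c.
by [].
Qed.

Theorem corollary3 :
  (forall n : nat, 0 < n -> n \notin [:: 1; 2; 3; 6] -> A' n 6 4 = A n 6 4) /\
  (forall n : nat, n \in [:: 1; 2; 3] -> A' n 6 4 = 1) /\
  A' 6 6 4 = 2.
Proof.
split; first exact: part1.
split; first exact: part2.
exact: part3.
Qed.
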